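(* Let $n\ge2$, let $(e_1,\dots,e_n)$ be the canonical basis of $\mathbb{R}^n$, let $E_{i,j}$ be the $n\times n$ matrix with $1$ in row $i$, column $j$ and $0$ elsewhere, and let $(E_{i,j}^* )$ be the dual basis of $\mathfrak{gl}(n,\mathbb{R})^*$. Define $\mathfrak{h}=\{A\in\mathfrak{sl}(n,\mathbb{R}):\exists\lambda\in\mathbb{R},\ A e_n=\lambda e_n\}$ and, for $\alpha=1,\dots,n$, the 2-form $\theta_\alpha$ on $\mathfrak{sl}(n,\mathbb{R})$ by $\theta_\alpha(A,B)=-E_{\alpha,n}^*([A,B])$ (the restriction of $dE^*_{\alpha,n}$). Then $(\mathfrak{h},\theta_1,\dots,\theta_n)$ is an $n$-symplectic structure on $\mathfrak{sl}(n,\mathbb{R})$ (here $\dim\mathfrak{sl}(n,\mathbb{R})=(n-1)(n+1)$ and $\dim\mathfrak{h}=n(n-1)$).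
   Context: A $k$-symplectic structure on a real Lie algebra $\mathfrak{g}$ of dimension $m(k+1)$ ($m,k\ge1$) is a pair consisting of a Lie subalgebra $\mathfrak{h}\subset\mathfrak{g}$ of dimension $mk$ and a family $(\theta_1,\dots,\theta_k)$ of skew-symmetric bilinear forms on $\mathfrak{g}$ such that: (i) $\bigcap_{i=1}^k\ker\theta_i=\{0\}$, where $\ker\theta_i=\{u\in\mathfrak{g}:\theta_i(u,v)=0\ \forall v\in\mathfrak{g}\}$; (ii) each $\theta_i$ is a 2-cocycle: $\theta_i([u,v],w)+\theta_i([v,w],u)+\theta_i([w,u],v)=0$ for all $u,v,w$; (iii) $\theta_i(u,v)=0$ for all $u,v\in\mathfrak{h}$ and all $i$. *)

(* Defs.v *)
From HB Require Import structures.
From mathcomp Require Import all_boot all_order all_algebra.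
Set Implicit Arguments. Unset Strict Implicit. Unset Printing Implicit Defensive.
Import Order.TTheory GRing.Theory Num.Theory.
Local Open Scope ring_scope.

Definition lie_bracket (R : comNzRingType) (n : nat) (A B : 'M[R]_n) : 'M[R]_n :=
  A *m B - B *m A.

Definition lie_subalgebra (R : fieldType) (n : nat) (g : {vspace 'M[R]_n}) : Prop :=
  forall A B, A \in g -> B \in g -> lie_bracket A B \in g.

(* k-symplectic structure (h, theta_1..theta_k) on the Lie algebra g
   (g a Lie subalgebra of gl(n,R)), of dimension m(k+1), m,k >= 1.
   The forms theta_i are given as functions on 'M_n; only their
   restriction to g matters. *)
Definition k_symplectic_structure (R : fieldType) (n k m : nat)
    (g h : {vspace 'M[R]_n}) (theta : 'I_k -> 'M[R]_n -> 'M[R]_n -> R) : Prop :=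
  [/\ (0 < m)%N, (0 < k)%N, lie_subalgebra g, \dim g = (m * k.+1)%N &
  [/\ (h <= g)%VS, lie_subalgebra h, \dim h = (m * k)%N &
  (
      (forall i a u v w, u \in g -> v \in g -> w \in g ->
         theta i (a *: u + v) w = a * theta i u w + theta i v w) /\
      (forall i a u v w, u \in g -> v \in g -> w \in g ->
         theta i w (a *: u + v) = a * theta i w u + theta i w v) /\
      (forall i u v, u \in g -> v \in g -> theta i u v = - theta i v u) /\
      (forall u, u \in g ->
         (forall i v, v \in g -> theta i u v = 0) -> u = 0) /\
      (forall i u v w, u \in g -> v \in g -> w \in g ->
         theta i (lie_bracket u v) w + theta i (lie_bracket v w) u
         + theta i (lie_bracket w u) v = 0) /\
      (forall i u v, u \in h -> v \in h -> theta i u v = 0))]].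

Lemma lt_pred_self (n : nat) : (0 < n)%N -> (n.-1 < n)%N.
Proof. by move=> hn; rewrite ltn_predL. Qed.

(* the last index n (0-based: n-1) of 'I_n *)
Definition last_idx (n : nat) (hn : (0 < n)%N) : 'I_n := Ordinal (lt_pred_self hn).

Definition can_vec (R : nzRingType) (n : nat) (i : 'I_n) : 'cV[R]_n := delta_mx i 0.

(* E*_{i,j}(M) = M i j ; theta_alpha(A,B) = - E*_{alpha,n}([A,B]) *)
Definition theta_sl (R : comNzRingType) (n : nat) (hn : (0 < n)%N)
   (alpha : 'I_n) (A B : 'M[R]_n) : R :=
  - (lie_bracket A B) alpha (last_idx hn).

(* Main.v *)
Require Import Defs.
From HB Require Import structures.
From mathcomp Require Import all_boot all_order all_algebra.
From mathcomp Require Import ring zify.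
Set Implicit Arguments. Unset Strict Implicit. Unset Printing Implicit Defensive.
Import Order.TTheory GRing.Theory Num.Theory.
Local Open Scope ring_scope.

Definition trf (R : fieldType) (n : nat) (A : 'M[R]_n) : R^o := \tr A.

Lemma trf_lin (R : fieldType) (n : nat) : linear (@trf R n).
Proof. by move=> a A B; rewrite /trf mxtraceD mxtraceZ. Qed.

HB.instance Definition _ (R : fieldType) (n : nat) :=
  GRing.isLinear.Build R 'M[R]_n R^o _ (@trf R n) (@trf_lin R n).

Definition hf (R : fieldType) (n : nat) (l : 'I_n) (A : 'M[R]_n) : 'rV[R]_n :=
  \row_i (if i == l then \tr A else A i l).

Lemma hf_lin (R : fieldType) (n : nat) (l : 'I_n) : linear (@hf R n l).
Proof.
move=> a A B; apply/rowP => i; rewrite !mxE.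
by case: eqP => _; rewrite ?mxtraceD ?mxtraceZ // !mxE.
Qed.

HB.instance Definition _ (R : fieldType) (n : nat) (l : 'I_n) :=
  GRing.isLinear.Build R 'M[R]_n 'rV[R]_n _ (@hf R n l) (@hf_lin R n l).

Lemma dim_lker_surj (R : fieldType) (U V : vectType R) (f : 'Hom(U, V)) :
  (forall w, exists v, f v = w) -> \dim (lker f) = (\dim {:U} - \dim {:V})%N.
Proof.
move=> surj.
rewrite -(limg_ker_dim f fullv) capfv.
have -> : limg f = fullv.
  apply/vspaceP => w; rewrite memvf; have [v <-] := surj w.
  exact: memv_img (memvf v).
by rewrite addnK.
Qed.

Lemma col_can (R : fieldType) (n : nat) (A : 'M[R]_n) (l i : 'I_n) :
  (A *m can_vec R l) i 0 = A i l.
Proof. by rewrite /can_vec -colE mxE. Qed.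

Lemma mul_mx_deltaE (R : fieldType) (n : nat) (A : 'M[R]_n) (a b i j : 'I_n) :
  (A *m delta_mx a b) i j = if b == j then A i a else 0.
Proof.
rewrite mxE (bigD1 a) //= big1 ?addr0.
  by rewrite mxE eqxx /= [b == j]eq_sym; case: eqP => _; rewrite ?mulr1 ?mulr0.
by move=> k /negPf nk; rewrite mxE nk mulr0.
Qed.

Lemma mul_delta_mxE (R : fieldType) (n : nat) (A : 'M[R]_n) (a b i j : 'I_n) :
  (delta_mx a b *m A) i j = if i == a then A b j else 0.
Proof.
rewrite mxE (bigD1 b) //= big1 ?addr0.
  by rewrite mxE eqxx andbT; case: eqP => _; rewrite ?mul1r ?mul0r.
by move=> k /negPf nk; rewrite mxE nk andbF mul0r.
Qed.

Lemma tr_delta (R : fieldType) (n : nat) (a b : 'I_n) :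
  \tr (delta_mx a b : 'M[R]_n) = (a == b)%:R.
Proof.
rewrite /mxtrace (bigD1 a) //= big1 ?addr0.
  by rewrite mxE eqxx.
by move=> k /negPf nk; rewrite mxE nk.
Qed.

Lemma jacobi (R : fieldType) (n : nat) (u v w : 'M[R]_n) :
  lie_bracket (lie_bracket u v) w + lie_bracket (lie_bracket v w) u
  + lie_bracket (lie_bracket w u) v = 0.
Proof.
rewrite /lie_bracket !mulmxBl !mulmxBr !mulmxA.
move: (u *m v *m w) (v *m u *m w) (w *m u *m v) (w *m v *m u) (v *m w *m u) (u *m w *m v).
move=> a b c d e f.
by rewrite !opprB !addrA (addrAC _ e (-d)) (addrAC _ (-c) (-d)) addrK (addrAC _ f (-a)) (addrAC _ f c) addrK (addrAC _ (-a) c) (addrAC _ e c) subrK (addrAC _ e (-a)) (addrAC _ (-b) (-a)) subrr (addrAC _ e b) addrK subrK.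
Qed.

Lemma eigen_iff (R : fieldType) (n : nat) (l : 'I_n) (A : 'M[R]_n) :
  (forall i, i != l -> A i l = 0) <->
  exists lambda : R, A *m can_vec R l = lambda *: can_vec R l.
Proof.
split.
  move=> H; exists (A l l); apply/matrixP => i j; rewrite (ord1 j) col_can !mxE eqxx andbT.
  by case: eqP => [->|/eqP/H ->]; rewrite ?mulr1 ?mulr0.
move=> [lam H] i il; have := congr1 (fun M : 'M[R]_(n,1) => M i 0) H; rewrite col_can /= !mxE.
by rewrite (negPf il) mulr0.
Qed.

Lemma mem_trf (R : fieldType) (n : nat) (A : 'M[R]_n) :
  (A \in lker (linfun (@trf R n))) = (\tr A == 0).
Proof. by rewrite memv_ker lfunE. Qed.

Lemma mem_hf (R : fieldType) (n : nat) (l : 'I_n) (A : 'M[R]_n) :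
  A \in lker (linfun (hf l)) <-> (\tr A = 0 /\ forall i, i != l -> A i l = 0).
Proof.
rewrite memv_ker lfunE; split.
  move/eqP/rowP => H; split; first by have := H l; rewrite !mxE eqxx.
  by move=> i il; have := H i; rewrite !mxE (negPf il).
by move=> [H1 H2]; apply/eqP/rowP => i; rewrite !mxE; case: eqP => [//|/eqP/H2].
Qed.

Lemma entryDZ (R : fieldType) (n : nat) (X Y : 'M[R]_n) a i j :
  (a *: X + Y) i j = a * X i j + Y i j.
Proof. by rewrite !mxE. Qed.
Lemma entryD (R : fieldType) (n : nat) (X Y : 'M[R]_n) i j :
  (X + Y) i j = X i j + Y i j.
Proof. by rewrite !mxE. Qed.
Lemma entryB (R : fieldType) (n : nat) (X Y : 'M[R]_n) i j :
  (X - Y) i j = X i j - Y i j.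
Proof. by rewrite !mxE. Qed.
Lemma lbE (R : fieldType) (n : nat) (X Y : 'M[R]_n) i j :
  lie_bracket X Y i j = (X *m Y) i j - (Y *m X) i j.
Proof. by rewrite /lie_bracket entryB. Qed.

Lemma tr_lb (R : fieldType) (n : nat) (X Y : 'M[R]_n) : \tr (lie_bracket X Y) = 0.
Proof. by rewrite /lie_bracket raddfB /= mxtrace_mulC subrr. Qed.

Lemma lb_eigen (R : fieldType) (n : nat) (l : 'I_n) (X Y : 'M[R]_n) a b :
  X *m can_vec R l = a *: can_vec R l -> Y *m can_vec R l = b *: can_vec R l ->
  lie_bracket X Y *m can_vec R l = 0.
Proof.
move=> HX HY; rewrite /lie_bracket mulmxBl -!mulmxA HX HY -!scalemxAr HX HY.
by rewrite !scalerA mulrC subrr.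
Qed.

Lemma dimM (R : fieldType) (n : nat) : \dim {:'M[R]_n} = (n * n)%N.
Proof. by rewrite dimvf. Qed.
Lemma dimRo (R : fieldType) : \dim {:R^o} = 1%N.
Proof. by rewrite dimvf. Qed.
Lemma dimrV (R : fieldType) (n : nat) : \dim {:'rV[R]_n} = n.
Proof. by rewrite dimvf /= /dim /= mul1n. Qed.

Theorem mainTheorem10 (R : realFieldType) (n : nat) (hn : (2 <= n)%N) :
  exists (sl h : {vspace 'M[R]_n}),
    [/\ (forall A : 'M[R]_n, A \in sl <-> \tr A = 0),
        (forall A : 'M[R]_n, A \in h <->
           (A \in sl /\ exists lambda : R,
              A *m can_vec R (last_idx (ltnW hn))
              = lambda *: can_vec R (last_idx (ltnW hn)))) &
        k_symplectic_structure n.-1 sl h (theta_sl (ltnW hn))].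
Proof.
set l := last_idx (ltnW hn).
pose i0 : 'I_n := Ordinal (ltnW hn).
have i0l : i0 != l by rewrite -val_eqE /=; apply/eqP; lia.
have n0 : (n%:R : R) != 0 by rewrite pnatr_eq0; apply/eqP; lia.
pose sl := lker (linfun (@trf R n)).
pose h := lker (linfun (@hf R n l)).
have memsl : forall A, A \in sl <-> \tr A = 0.
  by move=> A; rewrite mem_trf; split => /eqP.
have memh : forall A : 'M[R]_n, A \in h <-> (A \in sl /\ exists lambda : R,
              A *m can_vec R l = lambda *: can_vec R l).
  move=> A; rewrite mem_hf; split.
    by move=> [H1 /eigen_iff H2]; split => //; apply/memsl.
  by move=> [/memsl H1 /eigen_iff H2].
exists sl, h; split => //.
split.
- lia.
- lia.
- by move=> A B _ _; apply/memsl; rewrite tr_lb.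
- rewrite dim_lker_surj ?dimM ?dimRo; first by case: n hn {l i0 i0l n0 sl h memsl memh} => [|n'] //= _; lia.
  move=> w; exists ((w / n%:R)%:M); rewrite lfunE /= /trf mxtrace_scalar.
  by rewrite -(mulr_natr (w / n%:R)) mulfVK.
split.
- by apply/subvP => A /memh [].
- move=> A B /memh [_ [a Ha]] /memh [_ [b Hb]]; apply/memh; split.
    by apply/memsl; rewrite tr_lb.
  by exists 0; rewrite scale0r (lb_eigen Ha Hb).
- rewrite dim_lker_surj ?dimM ?dimrV; first by case: n hn {l i0 i0l n0 sl h memsl memh} => [|n'] //= _; lia.
  move=> w.
  exists (\matrix_(i, j) (if j == l then (if i == l then 0 else w 0 i)
            else if (i == i0) && (j == i0) then w 0 l else 0)).
  apply/rowP => i; rewrite lfunE /= /hf mxE; case: eqP => [->|il].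
    rewrite /mxtrace (bigD1 i0) //= big1 ?addr0.
      by rewrite mxE (negPf i0l) eqxx.
    by move=> k /negPf nk; rewrite mxE nk; case: (k == l).
  by rewrite mxE eqxx; have /negPf -> : i != l by apply/eqP.
split; [|split; [|split; [|split; [|split]]]].
- move=> i a u v w _ _ _; rewrite /theta_sl !lbE mulmxDl mulmxDr -scalemxAl -scalemxAr !entryDZ.
  ring.
- move=> i a u v w _ _ _; rewrite /theta_sl !lbE mulmxDl mulmxDr -scalemxAl -scalemxAr !entryDZ.
  ring.
- by move=> i u v _ _; rewrite /theta_sl !lbE opprK opprB.
- move=> u /memsl tru H.
  have H1 : forall j, j != l -> u j l = 0.
    move=> j jl; have hv : delta_mx l j \in sl.
      by apply/memsl; rewrite tr_delta eq_sym (negPf jl).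
    move: (H l _ hv); rewrite /theta_sl lbE mul_mx_deltaE mul_delta_mxE (negPf jl) eqxx.
    by rewrite sub0r opprK.
  have H2 : forall x j, j != l -> u x j = if x == j then u l l else 0.
    move=> x j jl; have hv : delta_mx j l \in sl.
      by apply/memsl; rewrite tr_delta (negPf jl).
    move: (H x _ hv); rewrite /theta_sl lbE mul_mx_deltaE mul_delta_mxE eqxx.
    by move/eqP; rewrite oppr_eq0 subr_eq0 => /eqP.
  have Hu : u = (u l l)%:M.
    apply/matrixP => x j; rewrite mxE.
    case: (eqVneq j l) => [->|jl].
      by case: (eqVneq x l) => [->|xl]; rewrite ?mulr1n // H1 // mulr0n.
    by rewrite H2 //; case: eqP; rewrite ?mulr1n ?mulr0n.
  have ull : u l l = 0.
    move: tru; rewrite {1}Hu mxtrace_scalar => /eqP; rewrite mulrn_eq0 => /orP [/eqP n00|/eqP //].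
    by exfalso; move: n0; rewrite n00 eqxx.
  by rewrite Hu ull; apply/matrixP => x j; rewrite !mxE mul0rn.
- move=> i u v w _ _ _; rewrite /theta_sl -!opprD -!entryD jacobi mxE oppr0 //.
- move=> i u v /memh [_ [a Ha]] /memh [_ [b Hb]].
  by rewrite /theta_sl -col_can (lb_eigen Ha Hb) mxE oppr0.
Qed.
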